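(* In the $L^p$ setting of the context ($1<p<\infty$), assume in addition that the measure space $(\Omega,\mu)$ is separable, $G$ is countable and $E$ is separable. Then for every finite $F\subset G$ and $a_g\in A$ ($g\in F$), the element $\bar b=\sum_{g\in F}\bar a_gV_g\in B(\bar A,V_g)$ satisfies $$\|\bar b\|_{L(H)}=\operatorname{ess\,sup}_{x\in\Omega}\|b_x\|_{L(l^p(G,E))},$$ where $b_x=\sum_{g\in F}\pi_x(a_g)\pi_x(T_g)$.
   Context: Setting: $(\Omega,\mu)$ is a measure space with $\sigma$-additive $\sigma$-finite measure $\mu$, $E$ a Banach space, $G$ a discrete group, $\{\alpha_g\}_{g\in G}$ a group of invertible measurable maps $\Omega\to\Omega$ ($\alpha_{gh}=\alpha_g\circ\alpha_h$, $\alpha_e=\mathrm{id}$) such that $\alpha_g$ and $\alpha_g^{-1}$ preserve $\mu$-null sets. $D=L^p_\mu(\Omega,E)$; $A=L^\infty_\mu(\Omega,L(E))$ acts on $D$ by $(af)(x)=a(x)f(x)$; $(T_gf)(x)=\rho_g(x)^{1/p}f(\alpha_g^{-1}(x))$, where $\rho_g$ is the Radon–Nikodym derivative of the measure $\Delta\mapsto\mu(\alpha_g^{-1}(\Delta))$ with respect to $\mu$; $\hat T_g(a)=T_gaT_g^{-1}$, i.e. $\hat T_g(a)(x)=a(\alpha_g^{-1}(x))$. Regular representation: $H=l^p(G,D)$; $(V_{g_0}\xi)(g)=\xi(gg_0)$; $(\bar a\xi)(g)=\hat T_g(a)\xi(g)$; $B(\bar A,V_g)$ is the closed subalgebra of $L(H)$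 generated by $\bar A$ and the $V_g$. Trajectorial representations: for $x\in\Omega$, $\pi_x(a)$ and $\pi_x(T_{g_0})$ are the operators on $l^p(G,E)$ given by $(\pi_x(a)\xi)_g=a(\alpha_g^{-1}(x))\xi_g$ and $(\pi_x(T_{g_0})\xi)_g=\xi_{gg_0}$, $\xi=(\xi_g)_{g\in G}\in l^p(G,E)$ (defined for a.e. $x$ after choosing representatives of the $a_g$). *)

(* Defs.v *)
From HB Require Import structures.
From mathcomp Require Import all_boot all_order all_algebra.
From mathcomp Require Import all_classical all_reals all_analysis.
Set Implicit Arguments. Unset Strict Implicit. Unset Printing Implicit Defensive.
Import Order.TTheory GRing.Theory Num.Theory.
Import numFieldNormedType.Exports.
Local Open Scope classical_set_scope.
Local Open Scope ring_scope.

Definition is_group (G : Type) (mul : G -> G -> G) (inv : G -> G) (e : G) : Prop :=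
  [/\ forall x y z, mul x (mul y z) = mul (mul x y) z,
      forall x, mul e x = x,
      forall x, mul x e = x,
      forall x, mul (inv x) x = e &
      forall x, mul x (inv x) = e].

Definition is_group_action (G T : Type) (mul : G -> G -> G) (e : G)
  (alpha : G -> T -> T) : Prop :=
  (forall g h, alpha (mul g h) = alpha g \o alpha h) /\ alpha e = id.

Definition separable_space (R : realType) (E : normedModType R) : Prop :=
  exists D : nat -> E, forall (y : E) (eps : R), 0 < eps ->
    exists n, `|y - D n| < eps.

Definition separable_measure (d : measure_display) (T : measurableType d)
  (R : realType) (mu : {measure set T -> \bar R}) : Prop :=
  exists C : nat -> set T, (forall n, measurable (C n)) /\
    forall A, measurable A -> (mu A < +oo)%E -> forall eps : R, 0 < eps ->
      exists n, (mu ((A `\` C n) `|` (C n `\` A)) < eps%:E)%E.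

(* Borel measurability of an E-valued function (for separable E this is
   strong / Bochner measurability). *)
Definition borel_meas (d : measure_display) (T : measurableType d)
  (R : realType) (E : normedModType R) (f : T -> E) : Prop :=
  forall U : set E, open U -> measurable (f @^-1` U).

(* Representative of an element of A = L^oo_mu(Omega, L(E)):
   a(x) is a bounded linear operator for every x, with a uniform bound,
   and x |-> a(x)u is measurable for every u (strong measurability). *)
Definition Linf_op (d : measure_display) (T : measurableType d)
  (R : realType) (E : normedModType R) (a : T -> E -> E) : Prop :=
  [/\ forall x (k : R) (u v : E), a x (k *: u + v) = k *: a x u + a x v,
      exists C : R, forall x u, `|a x u| <= C * `|u| &
      forall u, borel_meas (fun x => a x u)].

Definition lp_norm (R : realType) (G : choiceType) (E : normedModType R)
  (p : R) (eta : G -> E) : \bar R :=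
  ((\esum_(g in setT) ((`|eta g| `^ p)%:E)) `^ p^-1)%E.

(* Norm of H = l^p(G, L^p_mu(Omega,E)), in \bar R. *)
Definition H_norm (d : measure_display) (T : measurableType d)
  (R : realType) (mu : {measure set T -> \bar R}) (G : choiceType)
  (E : normedModType R) (p : R) (xi : G -> T -> E) : \bar R :=
  ((\esum_(g in setT) (\int[mu]_x ((`|xi g x| `^ p)%:E))) `^ p^-1)%E.

Definition in_H (d : measure_display) (T : measurableType d)
  (R : realType) (mu : {measure set T -> \bar R}) (G : choiceType)
  (E : normedModType R) (p : R) (xi : G -> T -> E) : Prop :=
  (forall g, borel_meas (xi g)) /\ (H_norm mu p xi < +oo)%E.

Definition H_opnorm (d : measure_display) (T : measurableType d)
  (R : realType) (mu : {measure set T -> \bar R}) (G : choiceType)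
  (E : normedModType R) (p : R) (op : (G -> T -> E) -> (G -> T -> E)) : \bar R :=
  ereal_sup [set H_norm mu p (op xi) | xi in
              [set xi | in_H mu p xi /\ (H_norm mu p xi <= 1)%E]].

Definition lp_opnorm (R : realType) (G : choiceType) (E : normedModType R)
  (p : R) (op : (G -> E) -> (G -> E)) : \bar R :=
  ereal_sup [set lp_norm p (op eta) | eta in [set eta | (lp_norm p eta <= 1)%E]].

Definition ess_sup_nonneg (d : measure_display) (T : measurableType d)
  (R : realType) (mu : {measure set T -> \bar R}) (f : T -> \bar R) : \bar R :=
  ereal_inf [set C : \bar R | (0 <= C)%E /\ {ae mu, forall x, (f x <= C)%E}].

(* The regular representation on H = l^p(G,D):
   (V_{g0} xi)(g) = xi(g g0); (abar xi)(g) = That_g(a) xi(g),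
   That_g(a)(x) = a(alpha_g^{-1}(x)) = a(alpha_{g^{-1}}(x)). *)
Definition V_H (G T E : Type) (mul : G -> G -> G) (g0 : G)
  (xi : G -> T -> E) : G -> T -> E := fun g => xi (mul g g0).

Definition abar (G T E : Type) (inv : G -> G) (alpha : G -> T -> T)
  (a : T -> E -> E) (xi : G -> T -> E) : G -> T -> E :=
  fun g x => a (alpha (inv g) x) (xi g x).

Definition pi_a (G T E : Type) (inv : G -> G) (alpha : G -> T -> T) (x : T)
  (a : T -> E -> E) (eta : G -> E) : G -> E :=
  fun g => a (alpha (inv g) x) (eta g).

Definition pi_T (G E : Type) (mul : G -> G -> G) (g0 : G) (eta : G -> E) : G -> E :=
  fun g => eta (mul g g0).

Definition bbar (G T : Type) (R : realType) (E : normedModType R)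
  (mul : G -> G -> G) (inv : G -> G) (alpha : G -> T -> T)
  (F : seq G) (a : G -> T -> E -> E) (xi : G -> T -> E) : G -> T -> E :=
  fun g x => \sum_(h <- F) abar inv alpha (a h) (V_H mul h xi) g x.

Definition b_x (G T : Type) (R : realType) (E : normedModType R)
  (mul : G -> G -> G) (inv : G -> G) (alpha : G -> T -> T)
  (F : seq G) (a : G -> T -> E -> E) (x : T) (eta : G -> E) : G -> E :=
  fun g => \sum_(h <- F) pi_a inv alpha x (a h) (pi_T mul h eta) g.

(* Main.v *)
Require Import Defs.
From HB Require Import structures.
From mathcomp Require Import all_boot all_order all_algebra.
From mathcomp Require Import all_classical all_reals all_analysis.
From mathcomp Require Import ring lra measurable_realfun.
Import Order.TTheory GRing.Theory Num.Theory.
Import numFieldNormedType.Exports.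
Local Open Scope classical_set_scope.
Local Open Scope ring_scope.
Set Implicit Arguments. Unset Strict Implicit. Unset Printing Implicit Defensive.
Section borel.
Context (R : realType) (d : measure_display) (T : measurableType d)
  (E : normedModType R).

Lemma borel_cst (v : E) : borel_meas (fun _ : T => v).
Proof.
move=> U _; have [Uv|Uv] := pselect (U v).
  by rewrite (_ : _ @^-1` _ = setT) //; apply/seteqP; split.
by rewrite (_ : _ @^-1` _ = set0) //; apply/seteqP; split.
Qed.

Lemma open_ballE (v : E) (r : R) : open [set y : E | `|v - y| < r].
Proof.
rewrite (_ : [set y | _] = ball v r); first exact: ball_open.
by apply/seteqP; split => y /=; rewrite -ball_normE.
Qed.

Lemma borel_ball (f : T -> E) (v : E) (r : R) : borel_meas f ->
  measurable [set x | `|v - f x| < r].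
Proof. by move=> bf; apply: (bf [set y | `|v - y| < r]); exact: open_ballE. Qed.

Lemma borel_comp_lip (D : nat -> E) (F : T -> E -> E) (C : R) (xi : T -> E) :
  (forall (y : E) (eps : R), 0 < eps -> exists n, `|y - D n| < eps) ->
  (forall v, borel_meas (fun x => F x v)) ->
  (forall x u v, `|F x u - F x v| <= C * `|u - v|) ->
  borel_meas xi -> borel_meas (fun x => F x (xi x)).
Proof.
move=> dD bF lF bxi U oU.
pose r (j : nat) : R := (j.+1%:R)^-1.
have r_gt0 j : 0 < r j by rewrite invr_gt0 ltr0n.
pose cond j m := forall y, `|D m - y| < (`|C| + 2) * r j -> U y.
pose piece j n m := [set x | cond j m /\
   (`|D n - xi x| < r j /\ `|D m - F x (D n)| < r j)].
have -> : (fun x => F x (xi x)) @^-1` U =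
   \bigcup_j \bigcup_n \bigcup_m piece j n m.
  apply/seteqP; split => x /=.
  - move=> Ux.
    have [e e0 eU] : exists2 e : R, 0 < e & forall y, `|F x (xi x) - y| < e -> U y.
      move: oU; rewrite openE => /(_ _ Ux); rewrite /interior nbhs_ballP => -[e /= e0 eU].
      by exists e => // y ey; apply: eU; rewrite -ball_normE.
    pose K := (`|C| * 2 + 4).
    have K0 : 0 < K by rewrite /K ltr_wpDl // mulr_ge0.
    have [j jK] : exists j, r j < e / K.
      have := near_infty_natSinv_lt (PosNum (divr_gt0 e0 K0)).
      by case=> N _ HN; exists N; apply: (HN N) => /=.
    have [n hn] := dD (xi x) (r j) (r_gt0 j).
    have [m hm] := dD (F x (D n)) (r j) (r_gt0 j).
    exists j => //; exists n => //; exists m => //; split; last first.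
      by split => //; rewrite distrC.
    move=> y hy; apply: eU.
    have h1 : `|F x (xi x) - F x (D n)| <= `|C| * r j.
      apply: le_trans (lF _ _ _) _; apply: le_trans (_ : `|C| * `|xi x - D n| <= _).
        by apply: ler_wpM2r => //; exact: ler_norm.
      by apply: ler_wpM2l => //; exact: ltW.
    have key : `|F x (xi x) - y| <=
        `|F x (xi x) - F x (D n)| + `|F x (D n) - D m| + `|D m - y|.
      apply: le_trans (ler_distD (D m) _ _) _; rewrite lerD2r.
      exact: ler_distD.
    apply: le_lt_trans key _.
    move: jK; rewrite ltr_pdivlMr // /K => jK.
    have c0 : 0 <= `|C| by [].
    have := r_gt0 j; nra.
  - move=> [j _ [n _ [m _ [cj [h1 h2]]]]]; apply: cj.
    have h3 : `|F x (D n) - F x (xi x)| <= `|C| * r j.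
      apply: le_trans (lF _ _ _) _; apply: le_trans (_ : `|C| * `|D n - xi x| <= _).
        by apply: ler_wpM2r => //; exact: ler_norm.
      by apply: ler_wpM2l => //; exact: ltW.
    apply: le_lt_trans (ler_distD (F x (D n)) _ _) _.
    have c0 : 0 <= `|C| by [].
    have := r_gt0 j; nra.
apply: bigcupT_measurable => j; apply: bigcupT_measurable => n.
apply: bigcupT_measurable => m.
have [cj|cj] := pselect (cond j m).
  rewrite (_ : piece j n m = [set x | `|D n - xi x| < r j] `&`
                              [set x | `|D m - F x (D n)| < r j]).
    by apply: measurableI; apply: borel_ball.
  by apply/seteqP; split => x /=; [case=> _ []|case=> ? ?].
by rewrite (_ : piece j n m = set0) //; apply/seteqP; split => x // [].
Qed.
End borel.
Section borel2.
Context (R : realType) (d : measure_display) (T : measurableType d)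
  (E : normedModType R).

Lemma borel_add (D : nat -> E) (f g : T -> E) :
  (forall (y : E) (eps : R), 0 < eps -> exists n, `|y - D n| < eps) ->
  borel_meas f -> borel_meas g -> borel_meas (fun x => f x + g x).
Proof.
move=> dD bf bg.
apply: (@borel_comp_lip R d T E D (fun x v => v + g x) 1 f dD) => //.
- move=> v U oU.
  have -> : (fun x => v + g x) @^-1` U = g @^-1` [set y | U (v + y)] by [].
  apply: bg; move: oU; apply: (proj1 (continuousP (fun y : E => v + y))).
  by move=> y; apply: cvgD; [exact: cvg_cst|exact: cvg_id].
- by move=> x u w; rewrite mul1r opprD addrACA subrr addr0.
Qed.

Lemma borel_sum (D : nat -> E) (I : eqType) (s : seq I) (f : I -> T -> E) :
  (forall (y : E) (eps : R), 0 < eps -> exists n, `|y - D n| < eps) ->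
  (forall i, i \in s -> borel_meas (f i)) -> borel_meas (fun x => \sum_(i <- s) f i x).
Proof.
move=> dD; elim: s => [|i s IH] bf.
  by under eq_fun do rewrite big_nil; exact: borel_cst.
have -> : (fun x => \sum_(j <- i :: s) f j x) =
  (fun x => f i x + \sum_(j <- s) f j x) by apply/funext => x; rewrite big_cons.
apply: (@borel_add D (f i) (fun x => \sum_(j <- s) f j x) dD).
  by apply: bf; rewrite mem_head.
by apply: IH => j js; apply: bf; rewrite inE js orbT.
Qed.

Lemma borel_norm (f : T -> E) : borel_meas f ->
  measurable_fun setT (fun x => `|f x|).
Proof.
move=> bf; apply: (measurability _ (measurable_realfun.RGenOpens.measurableE R)).
move=> _ [_ [a [b ->]] <-]; rewrite setTI.
have -> : (fun x => `|f x|) @^-1` `]a, b[%classic =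
   f @^-1` ((@Num.Def.normr R E) @^-1` `]a, b[%classic) by [].
apply: bf; move: (@interval_open R (BRight a) (BLeft b) isT isT); apply: (proj1 (continuousP _)).
exact: norm_continuous.
Qed.

End borel2.
Section esum_count.
Context (R : realType) (G : countType).
Local Open Scope ereal_scope.

Definition pk (f : G -> \bar R) (n : nat) : \bar R :=
  if pickle_inv n is Some g then f g else 0.

Lemma esum_series (f : G -> \bar R) : (forall g, 0 <= f g) ->
  \esum_(g in setT) f g = \sum_(n <oo) pk f n.
Proof.
move=> f0; have pk0 n : 0 <= pk f n by rewrite /pk; case: pickle_inv.
rewrite nneseries_esumT // (esumID (range (@pickle G))) //.
rewrite [X in _ + X]esum1 ?adde0; last first.
  move=> n [_ /= nr]; rewrite /pk; case E : (pickle_inv n) => [g|//].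
  by exfalso; apply: nr; exists g => //; have := @pickle_invK G n; rewrite E.
rewrite setTI esum_image; last by move=> x y _ _; exact: (pcan_inj (@pickleK_inv G)).
by apply: eq_esum => g _; rewrite /pk pickleK_inv.
Qed.

Lemma esumZl (k : R) (f : G -> \bar R) : (0 <= k)%R -> (forall g, 0 <= f g) ->
  \esum_(g in setT) (k%:E * f g) = k%:E * \esum_(g in setT) f g.
Proof.
move=> k0 f0; rewrite !esum_series //; last by move=> g; rewrite mule_ge0.
rewrite -nneseriesZl; last by move=> n _; rewrite /pk; case: pickle_inv.
by apply: eq_eseriesr => n _; rewrite /pk; case: pickle_inv => //; rewrite mule0.
Qed.

End esum_count.
Section tonelli.
Context (R : realType) (G : countType) (d : measure_display) (T : measurableType d)
  (mu : {measure set T -> \bar R}).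
Local Open Scope ereal_scope.

Lemma measurable_esum (f : G -> T -> \bar R) :
  (forall g, measurable_fun setT (f g)) -> (forall g x, 0 <= f g x) ->
  measurable_fun setT (fun x => \esum_(g in setT) f g x).
Proof.
move=> mf f0.
have -> : (fun x => \esum_(g in setT) f g x) =
   (fun x => \sum_(0 <= n <oo | n \in [set: nat]) pk (fun g => f g x) n).
  apply/funext => x; rewrite esum_series //.
  by apply: eq_eseriesl => n; rewrite in_setT.
apply: ge0_emeasurable_sum.
  by move=> k x _ _; rewrite /pk; case: pickle_inv.
by move=> k _; rewrite /pk; case: pickle_inv => [g|]; [exact: mf|exact: measurable_cst].
Qed.

Lemma integral_esum (f : G -> T -> \bar R) :
  (forall g, measurable_fun setT (f g)) -> (forall g x, 0 <= f g x) ->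
  \int[mu]_x (\esum_(g in setT) f g x) = \esum_(g in setT) \int[mu]_x f g x.
Proof.
move=> mf f0.
under eq_integral do rewrite esum_series //.
rewrite esum_series; last by move=> g; apply: integral_ge0 => x _.
rewrite integral_nneseries //.
- apply: eq_eseriesr => n _; rewrite /pk; case: pickle_inv => //.
  exact: integral0.
- by move=> n; rewrite /pk; case: pickle_inv => [g|]; [exact: mf|exact: measurable_cst].
- by move=> n x _; rewrite /pk; case: pickle_inv.
Qed.

End tonelli.
Section pow.
Context (R : realType).
Local Open Scope ereal_scope.

Lemma poweR_inv (r : R) (y : \bar R) : (0 < r)%R -> 0 <= y ->
  (y `^ r) `^ r^-1 = y.
Proof. by move=> r0 y0; rewrite -poweRrM mulfV ?gt_eqF // poweRe1. Qed.

Lemma poweR_inv' (r : R) (y : \bar R) : (0 < r)%R -> 0 <= y ->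
  (y `^ r^-1) `^ r = y.
Proof. by move=> r0 y0; rewrite -poweRrM mulVf ?gt_eqF // poweRe1. Qed.

Lemma in0y (y : \bar R) : 0 <= y -> y \in `[0%E, +oo%E].
Proof. by move=> y0; rewrite in_itv /= y0 leey. Qed.

Lemma poweR_le (r : R) (y z : \bar R) : (0 < r)%R -> 0 <= y -> 0 <= z ->
  (y `^ r <= z `^ r) = (y <= z).
Proof.
move=> r0 y0 z0; apply/idP/idP => h; last first.
  by apply: (gt0_ler_poweR (ltW r0)) => //; apply: in0y.
rewrite -(poweR_inv r0 y0) -(poweR_inv r0 z0).
have ri : (0 <= r^-1)%R by rewrite invr_ge0 ltW.
by apply: (gt0_ler_poweR ri) => //; apply: in0y; exact: poweR_ge0.
Qed.

End pow.
Section linop.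
Context (R : realType) (E : normedModType R) (X : Type) (a : X -> E -> E).
Hypothesis alin : forall x (k : R) (u v : E), a x (k *: u + v) = k *: a x u + a x v.

Lemma linop0 x : a x 0 = 0.
Proof.
have := alin x 1 0 0; rewrite scaler0 addr0 scale1r.
by move/(congr1 (fun w => w - a x 0)); rewrite subrr addrK.
Qed.

Lemma linopZ x k u : a x (k *: u) = k *: a x u.
Proof. by have := alin x k u 0; rewrite !addr0 linop0 addr0. Qed.

Lemma linopB x u v : a x (u - v) = a x u - a x v.
Proof.
have := alin x (-1) v u; rewrite !scaleN1r addrC => ->.
by rewrite addrC.
Qed.

End linop.

Lemma Linf_lip (R : realType) (d : measure_display) (T : measurableType d)
  (E : normedModType R) (a : T -> E -> E) : Linf_op a ->
  exists C : R, forall x u v, `|a x u - a x v| <= C * `|u - v|.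
Proof.
case=> alin [C hC] _; exists C => x u v.
by rewrite -(linopB alin) hC.
Qed.
Section analysis.
Context (R : realType).

Lemma lip_cvg (V W : normedModType R) (f : V -> W) (C : R) (u : nat -> V) (v : V) :
  (forall x y, `|f x - f y| <= C * `|x - y|) ->
  u n @[n --> \oo] --> v -> f (u n) @[n --> \oo] --> f v.
Proof.
move=> Lf /cvgrPdist_lt uv; apply/cvgrPdist_lt => e e0.
have K0 : 0 < `|C| + 1 by rewrite ltr_wpDl.
move: (uv (e / (`|C| + 1)) (divr_gt0 e0 K0)); apply: filterS => n.
rewrite ltr_pdivlMr // => hn.
apply: le_lt_trans (Lf _ _) _.
have h1 : C * `|v - u n| <= `|C| * `|v - u n| by apply: ler_wpM2r => //; exact: ler_norm.
have c0 : 0 <= `|C| by [].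
have n0 : 0 <= `|v - u n| by [].
nra.
Qed.

Lemma cvg_seqsum (V : normedModType R) (I : eqType) (s : seq I)
    (f : I -> nat -> V) (l : I -> V) :
  (forall i, i \in s -> f i n @[n --> \oo] --> l i) ->
  (\sum_(i <- s) f i n) @[n --> \oo] --> \sum_(i <- s) l i.
Proof.
elim: s => [|i s IH] H.
  rewrite big_nil; under eq_fun do rewrite big_nil; exact: cvg_cst.
under eq_fun do rewrite big_cons; rewrite big_cons; apply: cvgD.
  by apply: H; rewrite mem_head.
by apply: IH => j js; apply: H; rewrite inE js orbT.
Qed.

Lemma phi_cont (p : R) : 0 < p -> continuous (fun y : R => `|y| `^ p).
Proof.
move=> p0 y; have [->|y0] := eqVneq y 0.
  apply/cvgrPdist_lt => e e0.
  have ep : 0 < e `^ p^-1 by apply: powR_gt0.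
  have := @nbhs0_lt R R _ ep; apply: filterS => t ht /=.
  rewrite normr0 powR0 ?gt_eqF // sub0r normrN ger0_norm ?powR_ge0 //.
  have -> : e = (e `^ p^-1) `^ p by rewrite -powRrM mulVf ?gt_eqF ?powRr1 ?ltW.
  by apply: gt0_ltr_powR => //; rewrite ?inE ?nnegrE ?ltW.
have ny0 : `|y| != 0 by rewrite normr_eq0.
apply: (@cvg_trans _ ((expR (p * ln `|t|)) @[t --> y])).
  apply: near_eq_cvg.
  have /cvgrPdist_lt /(_ `|y|) := @cvg_id _ (nbhs y).
  rewrite normr_gt0 => /(_ y0); apply: filterS => t ht.
  rewrite /powR ifF //; apply/negbTE; rewrite normr_eq0; apply/eqP => t0.
  by move: ht; rewrite t0 subr0 ltxx.
have -> : (fun y1 : R => `|y1| `^ p) y = expR (p * ln `|y|).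
  by rewrite /= /powR (negbTE ny0).
have H1 : ln `|t| @[t --> y] --> ln `|y|.
  apply: (continuous_cvg _ (continuous_ln _)); last exact: cvg_norm.
  by rewrite normr_gt0.
have H2 : p * ln `|t| @[t --> y] --> p * ln `|y|.
  by apply: cvgM => //; exact: cvg_cst.
exact: (continuous_cvg _ (@continuous_expR R _) H2).
Qed.

Lemma psi_cont (V : normedModType R) (p : R) : 0 < p ->
  continuous (fun v : V => `|v| `^ p).
Proof.
move=> p0 v.
have -> : (fun v : V => `|v| `^ p) = (fun y : R => `|y| `^ p) \o (@Num.Def.normr R V).
  by apply/funext => w /=; rewrite normr_id.
apply: continuous_comp; first exact: norm_continuous.
exact: phi_cont.
Qed.

End analysis.
Section main.
Context (R : realType) (d : measure_display) (T : measurableType d)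
  (mu : {measure set T -> \bar R}) (E : normedModType R)
  (G : countType) (mul : G -> G -> G) (inv : G -> G)
  (alpha : G -> T -> T) (p : R) (F : seq G) (a : G -> T -> E -> E).
Hypothesis p0 : 0 < p.
Hypothesis mal : forall g, measurable_fun setT (alpha g).
Hypothesis aL : forall h, h \in F -> Linf_op (a h).
Variable D : nat -> E.
Hypothesis dD : forall (y : E) (eps : R), 0 < eps -> exists n, `|y - D n| < eps.

Local Notation Bx := (b_x mul inv alpha F a).
Local Notation bb := (bbar mul inv alpha F a).

Definition Ql (eta : G -> E) : \bar R := (\esum_(g in setT) ((`|eta g| `^ p)%:E))%E.
Definition Qh (xi : G -> T -> E) : \bar R :=
  (\esum_(g in setT) (\int[mu]_x ((`|xi g x| `^ p)%:E)))%E.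

Lemma BxE x eta g : Bx x eta g = \sum_(h <- F) a h (alpha (inv g) x) (eta (mul g h)).
Proof. by []. Qed.

Lemma bbE xi g x : bb xi g x = Bx x (fun g' => xi g' x) g.
Proof. by []. Qed.

Lemma BxZ x k eta g : Bx x (fun g' => k *: eta g') g = k *: Bx x eta g.
Proof.
rewrite !BxE scaler_sumr big_seq [RHS]big_seq; apply: eq_bigr => h hF.
by case: (aL hF) => alin _ _; rewrite (linopZ alin).
Qed.

Lemma Bx0 x eta g : (forall g', eta g' = 0) -> Bx x eta g = 0.
Proof.
move=> e0; rewrite BxE big_seq big1 // => h hF.
by case: (aL hF) => alin _ _; rewrite e0 (linop0 alin).
Qed.

Lemma borel_bb xi : (forall g, borel_meas (xi g)) ->
  forall g, borel_meas (fun x => bb xi g x).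
Proof.
move=> bxi g.
apply: (@borel_sum R d T E D G F (fun h x => abar inv alpha (a h) (V_H mul h xi) g x) dD).
move=> h hF; case: (aL hF) => alin [C hC] ameas.
apply: (@borel_comp_lip R d T E D (fun x v => a h (alpha (inv g) x) v) C
   (xi (mul g h)) dD) => //.
- move=> v U oU; have mU := ameas v U oU.
  by have := mal (inv g) measurableT mU; rewrite setTI.
- by move=> x u w; rewrite -(linopB alin); exact: hC.
Qed.

Lemma meas_pow (f : T -> E) : borel_meas f ->
  measurable_fun setT (fun x => (`|f x| `^ p)%:E).
Proof.
move=> bf; apply/measurable_EFinP.
exact: (measurableT_comp (measurable_powR p) (borel_norm bf)).
Qed.


Lemma Ql_ge0 eta : (0 <= Ql eta)%E.
Proof. by apply: esum_ge0 => g _; rewrite lee_fin powR_ge0. Qed.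

Lemma Ql_scale k eta :
  Ql (fun g => k *: eta g) = ((`|k| `^ p)%:E * Ql eta)%E.
Proof.
rewrite /Ql -esumZl //.
by apply: eq_esum => g _; rewrite normrZ powRM // -EFinM.
Qed.

Lemma Ql_term eta g : ((`|eta g| `^ p)%:E <= Ql eta)%E.
Proof.
apply: esum_ge; exists [set g]; first by split => //; exact: finite_set1.
by rewrite fsbig_set1.
Qed.

Lemma Ql0 eta : Ql eta = 0%E -> forall g, eta g = 0.
Proof.
move=> q0 g; have := Ql_term eta g; rewrite q0 lee_fin => h.
have : `|eta g| `^ p = 0 by apply/eqP; rewrite eq_le h powR_ge0.
by move/powR_eq0_eq0/eqP; rewrite normr_eq0 => /eqP.
Qed.

Lemma Ql_of0 eta : (forall g, eta g = 0) -> Ql eta = 0%E.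
Proof.
by move=> e0; apply: esum1 => g _; rewrite e0 normr0 powR0 // gt_eqF.
Qed.

Lemma PW x eta c : 0 < c -> (lp_opnorm p (Bx x) <= c%:E)%E ->
  (Ql (Bx x eta) <= (c `^ p)%:E * Ql eta)%E.
Proof.
move=> c0 hc.
have cp0 : 0 < c `^ p by apply: powR_gt0.
have := Ql_ge0 eta; case Eq: (Ql eta) => [w| |] // w0; last first.
  by rewrite gt0_muley ?lte_fin // leey.
move: w0; rewrite lee_fin le_eqVlt => /orP[/eqP w00|wpos].
  rewrite -w00 mule0 Ql_of0 // => g; apply: Bx0 => g'.
  by apply: Ql0; rewrite Eq -w00.
pose k := w `^ (- p^-1).
have kp : k `^ p = w^-1.
  by rewrite /k -powRrM mulNr mulVf ?gt_eqF // powR_inv1 // ltW.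
have k0 : 0 < k by apply: powR_gt0.
pose eta' := fun g => k *: eta g.
have Qe' : Ql eta' = 1%E.
  by rewrite /eta' Ql_scale Eq gtr0_norm // kp -EFinM mulVf // gt_eqF.
have h1 : (lp_norm p eta' <= 1)%E.
  by rewrite /lp_norm -/(Ql eta') Qe' poweR1r.
have h2 : (lp_norm p (Bx x eta') <= c%:E)%E.
  apply: le_trans hc; apply: ereal_sup_ubound; exists eta' => //.
have Beta : Bx x eta' = (fun g => k *: Bx x eta g).
  by apply/funext => g; rewrite BxZ.
have h3 : (Ql (Bx x eta') <= (c `^ p)%:E)%E.
  rewrite -(@poweR_le R p^-1) ?invr_gt0 //; last 2 first.
  - exact: Ql_ge0.
  - by rewrite lee_fin powR_ge0.
  by rewrite poweR_EFin -powRrM mulfV ?gt_eqF // powRr1 // ltW.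
move: h3; rewrite Beta Ql_scale gtr0_norm // kp => h3.
have -> : Ql (Bx x eta) = (w%:E * (w^-1%:E * Ql (Bx x eta)))%E.
  by rewrite muleA -EFinM mulfV ?gt_eqF // mul1e.
rewrite [X in (_ <= X)%E]muleC; apply: lee_wpmul2l => //; rewrite lee_fin ltW //.
Qed.


Lemma EFin_powpinv c : 0 <= c -> c%:E = (((c `^ p)%:E) `^ p^-1)%E.
Proof. by move=> c0; rewrite poweR_EFin -powRrM mulfV ?gt_eqF // powRr1. Qed.

Lemma dirA c : 0 < c -> (\forall x \ae mu, (lp_opnorm p (Bx x) <= c%:E)%E) ->
  forall xi, in_H mu p xi -> (H_norm mu p xi <= 1)%E ->
  (H_norm mu p (bb xi) <= c%:E)%E.
Proof.
move=> c0 hC xi [bxi _] hxi.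
have mfx : forall g, measurable_fun setT (fun x => (`|xi g x| `^ p)%:E).
  by move=> g; apply: meas_pow.
have mfb : forall g, measurable_fun setT (fun x => (`|bb xi g x| `^ p)%:E).
  by move=> g; apply: meas_pow; exact: borel_bb.
have Qxi : (Qh xi <= 1)%E.
  have hq : (0 <= Qh xi)%E.
    by rewrite /Qh; apply: esum_ge0 => g _; apply: integral_ge0 => x _; rewrite lee_fin powR_ge0.
  by rewrite -(@poweR_le R p^-1) ?invr_gt0 // poweR1r.
have pos0 g x : (0 <= (`|xi g x| `^ p)%:E)%E by rewrite lee_fin powR_ge0.
have pos1 g x : (0 <= (`|bb xi g x| `^ p)%:E)%E by rewrite lee_fin powR_ge0.
have key : (Qh (bb xi) <= (c `^ p)%:E * Qh xi)%E.
  rewrite /Qh -integral_esum // -integral_esum //.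
  rewrite -ge0_integralZl //; last 3 first.
  - exact: measurable_esum.
  - by move=> x _; apply: esum_ge0.
  - by rewrite lee_fin powR_ge0.
  apply: ae_ge0_le_integral => //.
  - by move=> x _; apply: esum_ge0.
  - exact: measurable_esum.
  - by move=> x _; apply: mule_ge0; [rewrite lee_fin powR_ge0|apply: esum_ge0].
  - apply: emeasurable_funM; first exact: measurable_cst.
    exact: measurable_esum.
  - by apply: filterS hC => x hx _; exact: (PW (fun g => xi g x) c0 hx).
rewrite -/(Qh (bb xi) `^ p^-1)%E.
rewrite (EFin_powpinv (ltW c0)) poweR_le ?invr_gt0 //; last 2 first.
- by rewrite /Qh; apply: esum_ge0 => g _; apply: integral_ge0 => x _.
- by rewrite lee_fin powR_ge0.
apply: le_trans key _; rewrite -[X in (_ <= X)%E]mule1.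
by apply: lee_wpmul2l => //; rewrite lee_fin powR_ge0.
Qed.


Lemma borel_ite (A : set T) (v w : E) : measurable A ->
  borel_meas (fun x => if x \in A then v else w).
Proof.
move=> mA U _.
have -> : (fun x => if x \in A then v else w) @^-1` U =
  (A `&` [set _ | U v]) `|` (~` A `&` [set _ | U w]).
  apply/seteqP; split => x /=.
    case: ifPn => xA Ux; [left|right]; split => //; first exact: set_mem.
    by move=> Ax; move: xA; rewrite (mem_set Ax).
  case=> -[xA Ux]; first by rewrite ifT // mem_set.
  by rewrite ifF //; apply/negbTE/negP => /set_mem.
have mc (P : Prop) : measurable [set _ : T | P].
  have [h|h] := pselect P.
    by rewrite (_ : [set _ | _] = setT) //; apply/seteqP; split.
  by rewrite (_ : [set _ | _] = set0) //; apply/seteqP; split.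
by apply: measurableU; apply: measurableI => //; exact: measurableC.
Qed.

Definition eta_s (s : seq (G * nat)) (g : G) : E :=
  \sum_(q <- s | q.1 == g) D q.2.

Definition Wsum (s : seq (G * nat)) : R :=
  \sum_(g <- undup (map fst s)) `|eta_s s g| `^ p.

Lemma eta_s_out s g : g \notin map fst s -> eta_s s g = 0.
Proof.
move=> gs; rewrite /eta_s big_seq_cond big1 // => q /andP[qs /eqP qg].
by move: gs; rewrite -qg map_f.
Qed.

Lemma eta_s_map (K : seq G) (nk : G -> nat) k : uniq K -> k \in K ->
  eta_s [seq (k', nk k') | k' <- K] k = D (nk k).
Proof.
move=> uK kK; rewrite /eta_s big_map /=.
by rewrite -big_filter filter_pred1_uniq // big_seq1.
Qed.

Lemma Ql_fin (eta : G -> E) (K : seq G) : uniq K ->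
  (forall g, g \notin K -> eta g = 0) ->
  Ql eta = (\sum_(g <- K) `|eta g| `^ p)%:E.
Proof.
move=> uK e0; rewrite /Ql (esumID [set` K]); last first.
  by move=> g _; rewrite lee_fin powR_ge0.
rewrite [X in (_ + X)%E]esum1 ?adde0; last first.
  by move=> g [_ /= /negP gK]; rewrite e0 ?normr0 ?powR0 ?gt_eqF //; exact/negP.
rewrite setTI esum_fset; last 2 first.
- exact: finite_seq.
- by move=> g _; rewrite lee_fin powR_ge0.
by rewrite -fsbig_seq // sumEFin.
Qed.

Lemma Ql_eta_s s : Ql (eta_s s) = (Wsum s)%:E.
Proof.
apply: Ql_fin; first exact: undup_uniq.
by move=> g; rewrite mem_undup; exact: eta_s_out.
Qed.

Lemma Wsum_ge0 s : 0 <= Wsum s.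
Proof. by apply: sumr_ge0 => g _; exact: powR_ge0. Qed.

Lemma meas_Bxpow (eta : G -> E) g :
  measurable_fun setT (fun x => `|Bx x eta g| `^ p).
Proof.
apply: (measurableT_comp (measurable_powR p)).
have := @borel_bb (fun g' _ => eta g') (fun g' => @borel_cst R d T E (eta g')) g.
exact: borel_norm.
Qed.

Definition cm (n : R) (m : nat) : R := n + m.+1%:R^-1.

Definition Sset (n : R) (i : seq (G * nat) * seq G * nat) : set T :=
  [set x | uniq i.1.2 /\ (cm n i.2) `^ p * Wsum i.1.1 <
     \sum_(g <- i.1.2) `|Bx x (eta_s i.1.1) g| `^ p].

Lemma Sset_meas n i : measurable (Sset n i).
Proof.
case: i => [[s J] m]; rewrite /Sset /=.
have [u|u] := boolP (uniq J); last first.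
  by rewrite (_ : [set _ | _] = set0) //; apply/seteqP; split => x // [/negP].
have mf : measurable_fun setT (fun x => \sum_(g <- J) `|Bx x (eta_s s) g| `^ p).
  by apply: measurable_sum => g; exact: meas_Bxpow.
rewrite (_ : [set _ | _] = setT `&` (fun x => \sum_(g <- J) `|Bx x (eta_s s) g| `^ p)
   @^-1` `](cm n m `^ p * Wsum s), +oo[%classic).
  by apply: mf => //; exact: measurable_itv.
apply/seteqP; split => x /=; rewrite in_itv /= andbT.
  by case.
by move=> [_ h]; split.
Qed.


Lemma cm_gt n m : n < cm n m.
Proof. by rewrite /cm ltrDl invr_gt0 ltr0n. Qed.

Lemma S_null n : 0 <= n -> sigma_finite setT mu ->
  (forall xi, in_H mu p xi -> (H_norm mu p xi <= 1)%E ->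
     (H_norm mu p (bb xi) <= n%:E)%E) ->
  forall i, mu (Sset n i) = 0%E.
Proof.
move=> n0 [Fk Fcov Fkp] hN [[s J] m].
set S := Sset n (s, J, m).
have mS : measurable S := Sset_meas n (s, J, m).
apply/eqP; apply: contraT => Sn0.
have [k Ak] : exists k, mu (S `&` Fk k) != 0%E.
  have [//|hk] := pselect (exists k, mu (S `&` Fk k) != 0%E).
  exfalso; move/negP: Sn0; apply.
  have neg : mu.-negligible S.
    rewrite (_ : S = \bigcup_k (S `&` Fk k)); last by rewrite -setI_bigcupr -Fcov setIT.
    apply: negligible_bigcup => k; exists (S `&` Fk k); split => //.
      by apply: measurableI => //; exact: (Fkp k).1.
    case: (eqVneq (mu (S `&` Fk k)) 0%E) => // h; exfalso; apply: hk; exists k; exact: h.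
  case: neg => N [mN muN SN]; rewrite eq_le measure_ge0 andbT -muN.
  by apply: le_measure => //; rewrite inE.
set A := S `&` Fk k.
have mA : measurable A by apply: measurableI => //; exact: (Fkp k).1.
have [mAr muA mApos] : exists2 r : R, mu A = r%:E & 0 < r.
  have fA : (mu A < +oo)%E.
    apply: le_lt_trans (Fkp k).2; apply: le_measure; rewrite ?inE //.
    - exact: (Fkp k).1.
    - by move=> x [].
  have r0 : (0 <= mu A)%E := measure_ge0 mu A.
  case EA: (mu A) => [r| |]; last 2 first.
  - by rewrite EA ltxx in fA.
  - by rewrite EA in r0; move: (le_lt_trans r0 ltNy0); rewrite ltxx.
  have r0' : 0 <= r by rewrite EA lee_fin in r0.
  exists r => //; rewrite lt_def r0' andbT.
  by apply: contra Ak; rewrite -/A EA => /eqP ->.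
have [x0 Ax0] : A !=set0.
  by apply/set0P; apply: contra Ak => /eqP A0; rewrite (_ : S `&` Fk k = set0) ?measure0.
have [uJ hx0] := Ax0.1.
set W := Wsum s.
have W0 : 0 < W.
  rewrite lt_def Wsum_ge0 andbT; apply/eqP => W0.
  have e0 : forall g, eta_s s g = 0 by apply: Ql0; rewrite Ql_eta_s -/W W0.
  move: hx0; rewrite -/W W0 mulr0 big1 ?ltxx // => g _.
  by rewrite Bx0 // normr0 powR0 // gt_eqF.
pose kk := (mAr * W) `^ (- p^-1).
have kp : kk `^ p = (mAr * W)^-1.
  rewrite /kk -powRrM mulNr mulVf ?gt_eqF // powR_inv1 // ltW // mulr_gt0 //.
have kk0 : 0 < kk by apply: powR_gt0; rewrite mulr_gt0.
pose xi := fun g x => if x \in A then kk *: eta_s s g else 0.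
have bxi : forall g, borel_meas (xi g) by move=> g; apply: borel_ite.
have mind : measurable_fun setT (fun x => (\1_A x)%:E : \bar R).
  by apply/measurable_EFinP; exact: measurable_indic.
have int_pow : forall (v : E), (\int[mu]_x ((`|if x \in A then v else 0| `^ p)%:E)
    = (`|v| `^ p)%:E * mu A)%E.
  move=> v; transitivity (\int[mu]_x ((`|v| `^ p)%:E * (\1_A x)%:E))%E.
    apply: eq_integral => x _; rewrite indicE; case: (x \in A).
      by rewrite mule1.
    by rewrite mule0 normr0 powR0 // gt_eqF.
  by rewrite ge0_integralZl // integral_indic // setIT.
have QhXi : Qh xi = 1%E.
  rewrite /Qh.
  transitivity (\esum_(g in setT) (((kk `^ p * mAr)%:E) * (`|eta_s s g| `^ p)%:E))%E.
    apply: eq_esum => g _; rewrite /xi int_pow muA normrZ gtr0_norm // powRM ?(ltW kk0) //.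
    by rewrite -!EFinM mulrAC.
  transitivity ((kk `^ p * mAr)%:E * \esum_(g in setT) (`|eta_s s g| `^ p)%:E)%E.
    apply: (@esumZl R G (kk `^ p * mAr) (fun g => (`|eta_s s g| `^ p)%:E)).
    - by rewrite mulr_ge0 // ?powR_ge0 // ltW.
    - by move=> g; rewrite lee_fin powR_ge0.
  have := Ql_eta_s s; rewrite /Ql => ->; rewrite -EFinM kp -mulrA mulVf //.
  by rewrite gt_eqF // mulr_gt0.
have Hxi : H_norm mu p xi = 1%E.
  by have -> : H_norm mu p xi = (Qh xi `^ p^-1)%E by []; rewrite QhXi poweR1r.
have hb : (H_norm mu p (bb xi) <= n%:E)%E.
  by apply: hN; [split => //; rewrite Hxi ltry|rewrite Hxi].
have bbxi : forall g x, bb xi g x = if x \in A then kk *: Bx x (eta_s s) g else 0.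
  move=> g x; rewrite bbE; case: ifPn => xA.
    by rewrite -BxZ; congr (Bx x _ g); apply/funext => g'; rewrite /xi xA.
  by apply: Bx0 => g'; rewrite /xi (negbTE xA).
have mfb : forall g, measurable_fun setT (fun x => (`|bb xi g x| `^ p)%:E).
  by move=> g; apply: meas_pow; exact: borel_bb.
have lower : ((cm n m `^ p)%:E <= Qh (bb xi))%E.
  apply: (@le_trans _ _ (\sum_(g <- J) \int[mu]_x ((`|bb xi g x| `^ p)%:E))%E).
    rewrite -ge0_integral_sum //.
    apply: (@le_trans _ _ (\int[mu]_x (((kk `^ p * cm n m `^ p * W)%:E) * (\1_A x)%:E))%E).
      rewrite ge0_integralZl //; last first.
        by rewrite lee_fin !mulr_ge0 ?powR_ge0 // ltW.
      rewrite integral_indic // setIT muA -EFinM lee_fin kp.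
      have -> : (mAr * W)^-1 * cm n m `^ p * W * mAr = cm n m `^ p.
        by field; apply/andP; split; rewrite gt_eqF.
      by [].
    apply: ge0_le_integral => //.
    - by move=> x _; apply: mule_ge0; rewrite lee_fin ?indicE; [rewrite !mulr_ge0 ?powR_ge0 // ltW|case: (x \in A)].
    - by apply: emeasurable_funM => //; exact: measurable_cst.
    - by apply: emeasurable_sum => g; exact: mfb.
    move=> x _; rewrite indicE; case: (boolP (x \in A)) => xA.
      have -> : (true%:R : R) = 1 by [].
      rewrite mule1.
      have -> : (\sum_(g <- J) (`|bb xi g x| `^ p)%:E)%R =
          ((\sum_(g <- J) kk `^ p * `|Bx x (eta_s s) g| `^ p)%:E)%E.
        rewrite -sumEFin; apply: eq_bigr => g _.
        by rewrite bbxi xA normrZ gtr0_norm // powRM ?(ltW kk0).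
      rewrite lee_fin -mulr_sumr -mulrA; apply: ler_wpM2l; first exact: powR_ge0.
      by apply: ltW; have := (set_mem xA).1 => -[].
    have -> : (false%:R : R) = 0 by [].
    rewrite mule0; apply: sume_ge0 => g _; rewrite lee_fin powR_ge0 //.
  rewrite /Qh; apply: esum_ge; exists [set` J]; first by split; [exact: finite_seq|].
  by rewrite -fsbig_seq.
have : ((cm n m)%:E <= H_norm mu p (bb xi))%E.
  have -> : H_norm mu p (bb xi) = (Qh (bb xi) `^ p^-1)%E by [].
  rewrite (EFin_powpinv (ltW (le_lt_trans n0 (cm_gt n m)))) poweR_le ?invr_gt0 //.
  - by rewrite lee_fin powR_ge0.
  - by rewrite /Qh; apply: esum_ge0 => g _; apply: integral_ge0 => x _; rewrite lee_fin powR_ge0.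
move/le_trans => /(_ _ hb); rewrite lee_fin => h.
by move: (cm_gt n m); rewrite ltNge h.
Qed.


Lemma Ql_ge_sum (eta : G -> E) (K : seq G) : uniq K ->
  ((\sum_(k <- K) `|eta k| `^ p)%:E <= Ql eta)%E.
Proof.
move=> uK; rewrite /Ql; apply: esum_ge; exists [set` K].
  by split; [exact: finite_seq|].
by rewrite -fsbig_seq // sumEFin.
Qed.

Lemma approx x eta (J : seq G) c : 0 <= c -> (Ql eta <= 1)%E ->
  c `^ p < \sum_(g <- J) `|Bx x eta g| `^ p ->
  exists s, c `^ p * Wsum s < \sum_(g <- J) `|Bx x (eta_s s) g| `^ p.
Proof.
move=> c0 Q1 ht.
set t := \sum_(g <- J) `|Bx x eta g| `^ p in ht.
set K := undup [seq mul g h | g <- J, h <- F].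
have uK : uniq K := undup_uniq _.
have KJ g h : g \in J -> h \in F -> mul g h \in K.
  by move=> gJ hF; rewrite mem_undup; apply: allpairs_f.
pose rj (j : nat) : R := j.+1%:R^-1.
have rj0 j : 0 < rj j by rewrite invr_gt0 ltr0n.
have nkP : forall j k, exists n, `|eta k - D n| < rj j by move=> j k; exact: dD.
pose nk j k := xchoose (nkP j k).
pose sj j := [seq (k, nk j k) | k <- K].
have ejK j k : k \in K -> eta_s (sj j) k = D (nk j k) by move=> kK; exact: eta_s_map.
have C1 : forall k, k \in K -> eta_s (sj j) k @[j --> \oo] --> eta k.
  move=> k kK; apply/cvgrPdist_lt => e e0.
  have := near_infty_natSinv_lt (PosNum e0); apply: filterS => j hj.
  rewrite ejK //; apply: lt_trans (xchooseP (nkP j k)) _; exact: hj.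
have Wj j : Wsum (sj j) = \sum_(k <- K) `|eta_s (sj j) k| `^ p.
  rewrite /Wsum; congr (\sum_(k <- _) _).
  rewrite /sj -map_comp /= map_id_in ?undup_id //.
have C2 : Wsum (sj j) @[j --> \oo] --> \sum_(k <- K) `|eta k| `^ p.
  under eq_fun do rewrite Wj.
  apply: cvg_seqsum => k kK.
  have := continuous_cvg _ (@psi_cont R E p p0 (eta k)) (C1 k kK).
  exact.
have C3 : (\sum_(g <- J) `|Bx x (eta_s (sj j)) g| `^ p) @[j --> \oo] --> t.
  apply: cvg_seqsum => g gJ.
  apply: (continuous_cvg _ (@psi_cont R E p p0 (Bx x eta g))).
  rewrite BxE; under eq_fun do rewrite BxE.
  apply: cvg_seqsum => h hF.
  have [C hC] := Linf_lip (aL hF).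
  apply: (@lip_cvg R E E (a h (alpha (inv g) x)) C).
    by move=> u v; exact: hC.
  by apply: C1; exact: KJ.
set w := \sum_(k <- K) `|eta k| `^ p.
have w1 : w <= 1.
  by have := le_trans (Ql_ge_sum eta uK) Q1; rewrite lee_fin.
have cw : c `^ p * w < t.
  apply: le_lt_trans ht; rewrite -[leRHS]mulr1; apply: ler_wpM2l => //.
  exact: powR_ge0.
have C4 : (\sum_(g <- J) `|Bx x (eta_s (sj j)) g| `^ p - c `^ p * Wsum (sj j))
   @[j --> \oo] --> t - c `^ p * w.
  by apply: cvgB => //; apply: cvgM => //; exact: cvg_cst.
have hpos : 0 < t - c `^ p * w by rewrite subr_gt0.
have := cvgr_gt (t - c `^ p * w) C4 0 hpos.
case=> N _ HN; exists (sj N); have := HN N (leqnn N) => /=.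
by rewrite subr_gt0.
Qed.


Lemma cover n x : 0 <= n -> (n%:E < lp_opnorm p (Bx x))%E -> exists i, Sset n i x.
Proof.
move=> n0 /ereal_sup_gt [_ [eta heta <-] hlt].
have Q1 : (Ql eta <= 1)%E.
  by rewrite -(@poweR_le R p^-1) ?invr_gt0 ?Ql_ge0 // poweR1r; exact: heta.
have Qlb : ((n `^ p)%:E < Ql (Bx x eta))%E.
  rewrite ltNge; apply/negP => h; move: hlt; apply/negP; rewrite -leNgt.
  have -> : lp_norm p (Bx x eta) = (Ql (Bx x eta) `^ p^-1)%E by [].
  by rewrite (EFin_powpinv n0) poweR_le ?invr_gt0 ?Ql_ge0 // lee_fin powR_ge0.
move: Qlb; rewrite /Ql => /ereal_sup_gt [_ [X [finX _] <-]].
rewrite fsbig_finite //= sumEFin lte_fin.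
set J := finmap.enum_fset (fset_set X).
have uJ : uniq J := finmap.fset_uniq _.
set t := \sum_(g <- J) _ => ht.
have t0 : 0 <= t by apply: sumr_ge0 => g _; exact: powR_ge0.
have tq : n < t `^ p^-1.
  have := @gt0_ltr_powR R p^-1 _ (n `^ p) t _ _ ht.
  rewrite -powRrM mulfV ?gt_eqF // powRr1 //; apply; rewrite ?inE ?nnegrE ?invr_gt0 ?powR_ge0 //.
have [m hm] : exists m, cm n m < t `^ p^-1.
  have e0 : 0 < t `^ p^-1 - n by rewrite subr_gt0.
  have := near_infty_natSinv_lt (PosNum e0).
  case=> M _ HM; exists M.
  by have := HM M (leqnn M) => /=; rewrite ltrBrDl.
have cm0 : 0 <= cm n m by apply: ltW; exact: le_lt_trans n0 (cm_gt n m).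
have hcm : cm n m `^ p < t.
  have := @gt0_ltr_powR R p p0 (cm n m) (t `^ p^-1) _ _ hm.
  rewrite -powRrM mulVf ?gt_eqF // powRr1 //; apply; rewrite ?inE ?nnegrE ?powR_ge0 //.
have [s hs] := approx cm0 Q1 hcm.
by exists (s, J, m); split.
Qed.

Lemma dirB n : 0 <= n -> sigma_finite setT mu ->
  (forall xi, in_H mu p xi -> (H_norm mu p xi <= 1)%E ->
     (H_norm mu p (bb xi) <= n%:E)%E) ->
  \forall x \ae mu, (lp_opnorm p (Bx x) <= n%:E)%E.
Proof.
move=> n0 sf hN.
pose Sk k := if (pickle_inv k : option (seq (G * nat) * seq G * nat)) is Some i
  then Sset n i else set0.
have negk k : mu.-negligible (Sk k).
  rewrite /Sk; case: pickle_inv => [i|].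
    by exists (Sset n i); split => //; [exact: Sset_meas|exact: S_null].
  by exists set0; split => //; rewrite measure0.
apply: (negligibleS _ (negligible_bigcup negk)).
move=> x /= hx.
have : (n%:E < lp_opnorm p (Bx x))%E by rewrite ltNge; apply/negP.
move/(cover n0) => [i hi]; exists (pickle i) => //.
by rewrite /Sk pickleK_inv.
Qed.


Lemma main_eq : sigma_finite setT mu ->
  H_opnorm mu p bb = ess_sup_nonneg mu (fun x => lp_opnorm p (Bx x)).
Proof.
move=> sf; apply/eqP; rewrite eq_le; apply/andP; split.
- apply: le_ereal_inf_tmp => C [C0 hC].
  case: C C0 hC => [c| |] C0 hC; last 2 first.
  + exact: leey.
  + by move: (le_lt_trans C0 ltNy0); rewrite ltxx.
  apply: ge_ereal_sup => _ [xi [Hxi Hxi1] <-].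
  have c00 : 0 <= c := C0.
  have [c0|c0] : c = 0 \/ 0 < c.
    by move: c00; rewrite le_eqVlt => /orP[/eqP <-|]; [left|right].
    apply/lee_addgt0Pr => e e0; rewrite c0 add0e.
  apply: (dirA e0) Hxi Hxi1; apply: filterS hC => x hx.
  by apply: le_trans hx _; rewrite c0 lee_fin ltW.
  exact: dirA.
- have N0 : (0 <= H_opnorm mu p bb)%E.
    pose xi0 : G -> T -> E := fun _ _ => 0.
    have Q0 : H_norm mu p xi0 = 0%E.
      have -> : H_norm mu p xi0 = (Qh xi0 `^ p^-1)%E by [].
      rewrite (_ : Qh xi0 = 0%E) ?poweR0r ?invr_neq0 ?gt_eqF //.
      apply: esum1 => g _; rewrite /xi0 normr0 powR0 ?gt_eqF //.
      exact: integral0.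
    apply: le_trans (_ : (H_norm mu p (bb xi0) <= _)%E).
      exact: poweR_ge0.
    apply: ereal_sup_ubound; exists xi0 => //; split; last by rewrite Q0.
    by split; [move=> g; exact: borel_cst|rewrite Q0 ltry].
  apply: ereal_inf_lbound; split => //.
  have hN : forall xi, in_H mu p xi -> (H_norm mu p xi <= 1)%E ->
      (H_norm mu p (bb xi) <= H_opnorm mu p bb)%E.
    by move=> xi h1 h2; apply: ereal_sup_ubound; exists xi.
  case EN: (H_opnorm mu p bb) N0 => [n| |] N0.
  * rewrite EN in hN; apply: dirB => //.
  * by apply: aeW => x; exact: leey.
  * by move: (le_lt_trans N0 ltNy0); rewrite ltxx.
Qed.

End main.

Unset Implicit Arguments.

Theorem lemma3p5
  (R : realType) (d : measure_display) (T : measurableType d)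
  (mu : {measure set T -> \bar R})
  (E : completeNormedModType R)
  (G : countType) (mul : G -> G -> G) (inv : G -> G) (e : G)
  (alpha : G -> T -> T) (p : R)
  (F : seq G) (a : G -> T -> E -> E) :
  1 < p ->
  sigma_finite setT mu ->
  separable_measure mu ->
  separable_space E ->
  is_group mul inv e ->
  is_group_action mul e alpha ->
  (forall g, measurable_fun setT (alpha g)) ->
  (forall g A, measurable A -> mu A = 0%E -> mu (alpha g @^-1` A) = 0%E) ->
  uniq F ->
  (forall h, h \in F -> Linf_op (a h)) ->
  H_opnorm mu p (bbar mul inv alpha F a) =
  ess_sup_nonneg mu (fun x => lp_opnorm p (b_x mul inv alpha F a x)).
Proof.
move=> p1 sf _ [D dD] _ _ mal _ _ aL.
have p0 : 0 < p by apply: lt_trans p1.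
exact: (@main_eq R d T mu E G mul inv alpha p F a p0 mal aL D dD sf).
Qed.
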